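(* Let $G$ and $H$ be finite abelian groups, written additively, of the same even order $k$, and let $f:G\to H$ be semi-planar. If $S(G,H;f)$ splits into two substructures, then each of the two substructures is divisible.
   Context: A function $f:G\to H$ is semi-planar if for every non-identity $a\in G$ and every $y\in H$, the equation $f(x+a)-f(x)=y$ has either $0$ or $2$ solutions $x\in G$. The incidence structure $S(G,H;f)$ has points $(x,y)\in G\times H$ and lines $\mathcal{L}(a,b)$ for $(a,b)\in G\times H$, with $(x,y)$ incident with $\mathcal{L}(a,b)$ iff $y=f(x-a)+b$. Its incidence graph is the bipartite graph on points and lines with an edge for each incident point-line pair. $S(G,H;f)$ splits into two substructures if its incidence graph has exactly two connected components; the substructures are the incidence structures formed by the points and lines of each component (each consists of $k^2/2$ points and $k^2/2$ lines). An incidence structure is divisible if its points can be partitioned into classes such that two distinct points from the same class lie on no common line and two points from different classes lie on exactly two common lines. *)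

(* Defs.v *)
From HB Require Import structures.
From mathcomp Require Import all_boot all_algebra.
Set Implicit Arguments. Unset Strict Implicit. Unset Printing Implicit Defensive.
Import GRing.Theory.
Local Open Scope ring_scope.

Section SemiPlanar.
Variables (G H : finZmodType).

Definition semi_planar (f : G -> H) : Prop :=
  forall (a : G) (y : H), a != 0 ->
    let c := #|[set x : G | f (x + a) - f x == y]| in ((c == 0) || (c == 2))%N.

(* Points and lines of S(G,H;f) are both indexed by G * H;
   point (x,y) is incident with line L(a,b) iff y = f(x - a) + b. *)
Definition incid (f : G -> H) (p l : G * H) : bool :=
  p.2 == f (p.1 - l.1) + l.2.

(* Vertices of the incidence graph: inl p = point p, inr l = line l. *)
Definition ivert := ((G * H) + (G * H))%type.

Definition iedge (f : G -> H) : rel ivert :=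
  fun u v => match u, v with
             | inl p, inr l => incid f p l
             | inr l, inl p => incid f p l
             | _, _ => false
             end.

Definition icomp (f : G -> H) (v : ivert) : {set ivert} :=
  [set w | connect (iedge f) v w].

Definition icomps (f : G -> H) : {set {set ivert}} :=
  [set icomp f v | v : ivert].

Definition splits_in_two (f : G -> H) : Prop := #|icomps f| = 2%N.

Definition sub_points (C : {set ivert}) : {set G * H} := [set p | inl p \in C].
Definition sub_lines (C : {set ivert}) : {set G * H} := [set l | inr l \in C].

Definition common_lines (f : G -> H) (C : {set ivert}) (p q : G * H) :=
  [set l in sub_lines C | incid f p l && incid f q l].

Definition divisible_sub (f : G -> H) (C : {set ivert}) : Prop :=
  exists P : {set {set G * H}},
    partition P (sub_points C) /\
    forall p q, p \in sub_points C -> q \in sub_points C -> p != q ->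
      (pblock P p == pblock P q -> #|common_lines f C p q| = 0%N) /\
      (pblock P p != pblock P q -> #|common_lines f C p q| = 2%N).

End SemiPlanar.

(* Main.v *)
Require Import Defs.
From mathcomp Require Import all_boot all_algebra.
Set Implicit Arguments. Unset Strict Implicit. Unset Printing Implicit Defensive.
Import GRing.Theory.
Local Open Scope ring_scope.

Section Aux.
Variables (G H : finZmodType) (f : G -> H).

Lemma iedge_sym : symmetric (iedge f).
Proof. by move=> [u|u] [v|v]. Qed.

Lemma incid_shift (s l : G * H) (c1 : G) (c2 : H) :
  incid f (s.1 - c1, s.2 - c2) (l.1 - c1, l.2 - c2) = incid f s l.
Proof.
rewrite /incid /= opprB [s.1 - c1 + _]addrA subrK addrA.
exact: (inj_eq (addIr (- c2))).
Qed.

Lemma comp_min (w0 : ivert G H) (X : {set G * H}) (q0 r : G * H) :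
  (forall s t l, s \in X -> incid f s l -> incid f t l -> t \in X) ->
  q0 \in X -> connect (iedge f) w0 (inl q0) -> connect (iedge f) w0 (inl r) ->
  r \in X.
Proof.
move=> clX Xq0 c0 c1.
pose Y := [pred v : ivert G H | match v with inl s => s \in X
          | inr l => [exists s, (s \in X) && incid f s l] end].
have csym := sym_connect_sym (@iedge_sym).
have clY : closed (iedge f) Y.
  apply: (intro_closed csym).
  move=> [s|l] [t|m] //= e; rewrite !inE /=.
    by move=> Xs; apply/existsP; exists s; rewrite Xs.
  by case/existsP => s /andP[Xs isl]; apply: clX Xs isl e.
have c01 : connect (iedge f) (inl q0) (inl r).
  by apply: connect_trans c1; rewrite csym.
by have := closed_connect clY c01; rewrite !inE /= Xq0 => <-.
Qed.

Lemma comp_closed (w0 : ivert G H) s t l :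
  connect (iedge f) w0 (inl s) -> incid f s l -> incid f t l ->
  connect (iedge f) w0 (inl t).
Proof.
move=> c i1 i2; apply: (connect_trans c); apply: (connect_trans (y := inr l)).
  by apply: connect1.
by apply: connect1; rewrite /= i2.
Qed.


Variable w0 : ivert G H.
Let Pts := sub_points (icomp f w0).

Lemma inPts p : (p \in Pts) = connect (iedge f) w0 (inl p).
Proof. by rewrite /Pts /sub_points /icomp !inE. Qed.

Lemma Pts_closed s t l : s \in Pts -> incid f s l -> incid f t l -> t \in Pts.
Proof. rewrite !inPts; exact: comp_closed. Qed.

Lemma Pts_trans (a b r : G * H) : a \in Pts -> b \in Pts -> r \in Pts ->
  (r.1 - (b.1 - a.1), r.2 - (b.2 - a.2)) \in Pts.
Proof.
move=> Pa Pb Pr.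
pose X := [set s : G * H | (s.1 - (b.1 - a.1), s.2 - (b.2 - a.2)) \in Pts].
have : r \in X.
  apply: (@comp_min w0 X b r) => //; last by rewrite -inPts.
  - move=> s t l; rewrite !inE -!inPts => Xs isl itl.
    apply: (Pts_closed (l := (l.1 - (b.1 - a.1), l.2 - (b.2 - a.2))) Xs);
      by rewrite incid_shift.
  - by rewrite inE /= !subKr -surjective_pairing.
  - by rewrite -inPts.
by rewrite inE.
Qed.

Lemma Pts_line p x : p \in Pts -> (x, f x + (p.2 - f p.1)) \in Pts.
Proof.
move=> Pp; apply: (Pts_closed (l := (0, p.2 - f p.1)) Pp).
  by rewrite /incid /= subr0 addrC subrK.
by rewrite /incid /= subr0.
Qed.

Lemma Pts_all : (forall z, z \in Pts) -> (#|icomps f| <= 1)%N.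
Proof.
move=> all.
have csym := sym_connect_sym (@iedge_sym).
have E : forall v, icomp f v = icomp f w0.
  move=> v; have cv : connect (iedge f) w0 v.
    case: v => [q|l]; first by rewrite -inPts.
    apply: (connect_trans (y := inl (l.1, f 0 + l.2))); first by rewrite -inPts.
    by apply: connect1; rewrite /= /incid /= subrr.
  by apply/setP => x; rewrite /icomp !inE (same_connect csym cv).
rewrite -(cards1 (icomp f w0)); apply: subset_leq_card.
by apply/subsetP => C /imsetP[v _ ->]; rewrite E inE.
Qed.

Lemma col_half p : p \in Pts -> ~ (forall z, z \in Pts) ->
  (2 * #|[set r in Pts | r.1 == p.1]| <= #|H|)%N.
Proof.
move=> Pp notall; set Y := [set r in Pts | r.1 == p.1].
case: (boolP [exists h : H, [forall r in Y, (r.1, r.2 + h) \notin Pts]]).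
  case/existsP => h /forallP Hh.
  pose g := fun r : G * H => (r.1, r.2 + h).
  have ginj : injective g by move=> [x y] [x' y'] [/= -> /addIr ->].
  have cY' : #|g @: Y| = #|Y| by rewrite card_imset.
  have dis : Y :&: g @: Y = set0.
    apply/setP => z; rewrite !inE; apply/negbTE/andP => -[Yz /imsetP[r Yr Ez]].
    have := Hh r; rewrite Yr /= -/(g r) -Ez.
    by rewrite inPts; case/andP: Yz => ->.
  have := cardsUI Y (g @: Y); rewrite dis cards0 addn0 cY' addnn -mul2n => <-.
  apply: (leq_trans _ (leq_imset_card (fun y : H => (p.1, y)) H)).
  apply: subset_leq_card; apply/subsetP => z; rewrite inE => /orP[].
    rewrite inE => /andP[_ /eqP E]; apply/imsetP; exists z.2 => //.
    by rewrite -E -surjective_pairing.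
  case/imsetP => r; rewrite inE => /andP[_ /eqP E] ->.
  by apply/imsetP; exists (r.2 + h); rewrite // /g E.
rewrite negb_exists => /forallP Hh; exfalso; apply: notall => z.
set w := (z.1, f z.1 + (p.2 - f p.1)).
have Pw : w \in Pts by apply: Pts_line.
have := Hh (z.2 - w.2); rewrite negb_forall => /existsP[r].
rewrite negb_imply negbK => /andP[Yr Pr'].
have Pr : r \in Pts by move: Yr; rewrite inE => /andP[].
have := Pts_trans Pr' Pr Pw.
simpl; rewrite subrr subr0 opprB [r.2 + _]addrC addrK addrC addrNK.
by rewrite -surjective_pairing.
Qed.

Lemma img_half (d : G) : semi_planar f -> d != 0 ->
  (#|G| <= 2 * #|[set (f (u + d) - f u)%R | u : G]|)%N.
Proof.
move=> sp dnz; set F := fun u => f (u + d) - f u; set Im := [set F u | u : G].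
have fib y : (#|[set x | F x == y]| <= 2 * (y \in Im))%N.
  case: (boolP (y \in Im)) => Iy.
    by have := sp d y dnz; rewrite /= -/F => /orP[] /eqP ->.
  rewrite muln0 leqn0 cards_eq0; apply/eqP/setP => x; rewrite !inE.
  apply/negbTE; apply: contra Iy => /eqP <-; exact: imset_f.
rewrite -(sum1_card G).
rewrite (partition_big F predT) //=.
apply: (@leq_trans (\sum_(y : H) 2 * (y \in Im))).
  apply: leq_sum => y _; apply: leq_trans (fib y).
  by rewrite -sum1_card; apply: eq_leq; apply: eq_bigl => x; rewrite inE.
rewrite -big_distrr /= leq_mul2l; apply/orP; right; rewrite -sum1_card big_mkcond /=.
rewrite [X in (_ <= X)%N]big_mkcond; apply: eq_leq; apply: eq_bigr => y _; by case: (y \in Im).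
Qed.

Lemma adj_main p q : semi_planar f -> #|G| = #|H| -> ~ (forall z, z \in Pts) ->
  p \in Pts -> q \in Pts -> q.1 != p.1 ->
  exists u, q.2 = p.2 + (f (u + (q.1 - p.1)) - f u).
Proof.
move=> sp cGH notall Pp Pq neq.
set d := q.1 - p.1.
have dnz : d != 0 by rewrite subr_eq0.
set F := fun u => f (u + d) - f u.
set Im := [set F u | u : G].
set X := [set r in Pts | r.1 == q.1].
set Y := [set r in Pts | r.1 == p.1].
pose g := fun y : H => (q.1, p.2 + y).
set Ad := g @: Im.
have AdX : Ad \subset X.
  apply/subsetP => z /imsetP[y /imsetP[u _ ->] ->].
  rewrite inE /g eqxx andbT.
  apply: (Pts_closed (l := (p.1 - u, p.2 - f u)) Pp).
    by rewrite /incid /= subKr addrC addrNK.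
  rewrite /incid /= /F.
  have -> : q.1 - (p.1 - u) = u + d by rewrite opprB addrCA.
  by rewrite addrCA.
have cAd : #|Ad| = #|Im|.
  by rewrite card_imset // => y y' [/addrI].
have XY : (#|X| <= #|Y|)%N.
  pose m := fun r : G * H => (r.1 - (q.1 - p.1), r.2 - (q.2 - p.2)).
  have minj : injective m by move=> [x y] [x' y'] [/= /subIr -> /subIr ->].
  rewrite -(card_imset X minj); apply: subset_leq_card.
  apply/subsetP => z /imsetP[r]; rewrite inE => /andP[Pr /eqP E] ->.
  by rewrite inE Pts_trans //= E subKr eqxx.
have hY := col_half Pp notall.
have hIm := img_half sp dnz.
have XAd : (#|X| <= #|Ad|)%N.
  rewrite cAd -(@leq_pmul2l 2) //; apply: leq_trans hIm.
  by rewrite cGH; apply: leq_trans hY; rewrite leq_pmul2l.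
have /eqP EAd : Ad == X by rewrite eqEcard AdX.
have : q \in Ad by rewrite EAd inE Pq eqxx.
case/imsetP => y /imsetP[u _ ->] Eq; exists u.
by rewrite Eq.
Qed.

Lemma common_card (p q : G * H) :
  #|[set l | incid f p l && incid f q l]| =
  #|[set x : G | f (x + (q.1 - p.1)) - f x == q.2 - p.2]|.
Proof.
pose phi := fun x : G => (p.1 - x, p.2 - f x).
have pinj : injective phi by move=> x y [/subrI].
rewrite -(card_imset _ pinj); apply: eq_card => l; rewrite inE.
apply/idP/imsetP.
  case/andP => /eqP Ep /eqP Eq; exists (p.1 - l.1).
    rewrite inE [p.1 - l.1 + _]addrC subrKA Ep Eq opprD addrACA subrr addr0 //.
  by rewrite /phi subKr Ep [f _ + l.2]addrC addrK -surjective_pairing.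
case=> x; rewrite inE => /eqP Ex ->; rewrite /incid /phi /=.
rewrite subKr addrC addrNK eqxx /=.
have -> : q.1 - (p.1 - x) = x + (q.1 - p.1) by rewrite opprB addrCA.
by rewrite addrCA Ex addrC addrNK.
Qed.
End Aux.

Theorem theorem1 (G H : finZmodType) (k : nat) (f : G -> H) :
  #|G| = k -> #|H| = k -> ~~ odd k ->
  semi_planar f ->
  splits_in_two f ->
  forall C, C \in icomps f -> divisible_sub f C.
Proof.
move=> cG cH _ sp spl C /imsetP[w0 _ ->].
have notall : ~ (forall z, z \in sub_points (icomp f w0)).
  by move=> all; have := Pts_all all; rewrite spl.
set Pts := sub_points (icomp f w0).
have partP := preim_partitionP (fun r : G * H => r.1) Pts.
exists (preim_partition (fun r : G * H => r.1) Pts); split => // p q Pp Pq pq.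
have [/eqP covP tiP _] := and3P partP.
have eqiR : {in Pts & &, equivalence_rel (fun x y : G * H => x.1 == y.1)}.
  by move=> x y z _ _ _; split=> // /eqP ->.
rewrite eq_pblock ?covP // (pblock_equivalence_partition eqiR) //.
have -> : common_lines f (icomp f w0) p q = [set l | incid f p l && incid f q l].
  apply/setP => l; rewrite !inE.
  case ipl: (incid f p l); last by rewrite /= andbF.
  case iql: (incid f q l); last by rewrite /= andbF.
  rewrite /= andbT.
  move: Pp; rewrite /Pts /sub_points /icomp !inE => Pp.
  by apply: (connect_trans Pp); apply: connect1.
rewrite common_card.
case: (boolP (p.1 == q.1)) => [/eqP E1|ne1]; split => // _.
  apply/eqP; rewrite cards_eq0; apply/eqP/setP => l; rewrite !inE.
  rewrite E1 subrr addr0 subrr; apply/negbTE; rewrite eq_sym subr_eq0.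
  apply: contra pq => /eqP E2.
  by rewrite [p]surjective_pairing [q]surjective_pairing E1 E2.
have dnz : q.1 - p.1 != 0 by rewrite subr_eq0 eq_sym.
have := sp (q.1 - p.1) (q.2 - p.2) dnz; rewrite /= => /orP[/eqP E0|/eqP //].
have cGH : #|G| = #|H| by rewrite cG cH.
have neq : q.1 != p.1 by rewrite eq_sym.
have [u Eu] := adj_main sp cGH notall Pp Pq neq.
exfalso; move/eqP: E0; rewrite cards_eq0 => /eqP/setP/(_ u); rewrite !inE.
by rewrite Eu [p.2 + _]addrC addrK eqxx.
Qed.
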